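(* Let $V$ be a finite set, $f:2^V\to\mathbb{R}_+$ nonnegative submodular with $f(\emptyset)=0$, $t_1,\ldots,t_k\in V$ distinct, and $\mathbf{x}=(x_{i,j})_{i\in[k],j\in V}$ with $x_{i,j}\ge0$, $\sum_{i=1}^k x_{i,j}=1$ for all $j\in V$, and $x_{i,t_i}=1$ for all $i$. For $\theta\in[0,1]$ let $A_i(\theta)=\{j: x_{i,j}>\theta\}$ and $B(\theta)=\{j: 1-\max_i x_{i,j}\ge\theta\}$. Then $$\sum_{i=1}^k\int_0^{1/2} f(A_i(\theta))\,d\theta\ \ge\ \int_0^{1/2} f(B(\theta))\,d\theta.$$ *)

(* Defs.v *)
From HB Require Import structures.
From mathcomp Require Import all_boot all_order all_algebra.
From mathcomp Require Import all_classical all_reals all_analysis.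
Set Implicit Arguments. Unset Strict Implicit. Unset Printing Implicit Defensive.
Import Order.TTheory GRing.Theory Num.Theory.
Local Open Scope ring_scope.

Definition submodular (R : realType) (V : finType) (f : {set V} -> R) : Prop :=
  forall A B : {set V}, f (A :|: B) + f (A :&: B) <= f A + f B.

Definition Aset (R : realType) (V : finType) (k : nat) (x : 'I_k -> V -> R)
  (i : 'I_k) (theta : R) : {set V} :=
  [set j | theta < x i j].

(* max_i x_{i,j}  (all x_{i,j} >= 0, so 0 is a harmless default) *)
Definition maxx (R : realType) (V : finType) (k : nat) (x : 'I_k -> V -> R)
  (j : V) : R := \big[Num.max/0]_(i < k) x i j.

Definition Bset (R : realType) (V : finType) (k : nat) (x : 'I_k -> V -> R)
  (theta : R) : {set V} :=
  [set j | theta <= 1 - maxx x j].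

(* Main.v *)
Require Import Defs.
From HB Require Import structures.
From mathcomp Require Import all_boot all_order all_algebra.
From mathcomp Require Import all_classical all_reals all_analysis.
From mathcomp Require Import lra.
Import Order.TTheory GRing.Theory Num.Theory.
Local Open Scope ring_scope.

Section S.
Local Open Scope classical_set_scope.
Variable R : realType.
Definition ind (b : bool) (a : R) : R -> R := \1_[set` Interval -oo%O (BSide b a)].

Lemma indE b a t : ind b a t = (if b then (t < a) else (t <= a))%:R.
Proof. by rewrite /ind indicE mem_setE in_itv /=; case: b. Qed.

Let D : set R := `[0%R, 2^-1%R].

Lemma mD : measurable D. Proof. exact: measurable_itv. Qed.

Lemma ind_int b a : 0 <= a ->
  (\int[lebesgue_measure]_(t in D) (ind b a t)%:E = (Num.min a 2^-1)%:E)%E.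
Proof.
move=> a0; rewrite /ind integral_indic//; last exact: measurable_itv.
have [ah|ah] := ltP a 2^-1.
  have -> : [set` Interval -oo%O (BSide b a)] `&` D = [set` Interval (BLeft 0) (BSide b a)].
    apply/seteqP; split => x /=; rewrite /D /= !in_itv /=; case: b => /=.
    - by case=> xa /andP[-> _]. 
    - by case=> xa /andP[-> _].
    - by move=> /andP[-> xa]; split => //; apply/andP; split => //; lra.
    - by move=> /andP[-> xa]; split => //; apply/andP; split => //; lra.
  apply: eq_trans (lebesgue_measure_itv _) _ => /=.
  rewrite lte_fin; case: ltP => a0'; first by rewrite oppr0 adde0.
  by have -> : a = 0 by apply/eqP; rewrite eq_le a0' a0.
have -> : [set` Interval -oo%O (BSide b a)] `&` D = [set` Interval (BLeft 0) (BSide (b && (a == 2^-1)) 2^-1)].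
  apply/seteqP; split => x /=; rewrite /D /= !in_itv /=; case: b => /=.
  - move=> [xa /andP[x0 xh]]; rewrite x0 /=.
    have [ea|na] := eqVneq a 2^-1; rewrite /= ?lteifT ?lteifF //.
    by rewrite -ea.
  - by case=> _ ->.
  - move=> /andP[x0]; have [ea|na] := eqVneq a 2^-1; rewrite /= ?lteifT ?lteifF // => xh;
      (split; [lra | apply/andP; split => //; lra]).
  - by move=> h; split => //; case/andP: h => ? ?; lra.
apply: eq_trans (lebesgue_measure_itv _) _ => /=.
rewrite lte_fin; case: ltP => h; first by rewrite oppr0 adde0.
exfalso; lra.
Qed.

Lemma ind_integrable b a :
  lebesgue_measure.-integrable D (EFin \o ind b a).
Proof.
have gi : lebesgue_measure.-integrable D (EFin \o (\1_D : R -> R)).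
  apply: (@integrableS _ _ _ _ setT) => //; first exact: measurable_itv.
  exact: (integrable_indic_itv 0 2^-1 true false).
eapply le_integrable; last exact: gi.
- exact: measurable_itv.
- apply/measurable_realfun.measurable_EFinP; apply: measurable_realfun.measurable_indic; exact: measurable_itv.
- move=> x Dx /=; rewrite /ind !indicE (mem_set Dx) /= normr1 ger0_norm.
    by case: (_ \in _).
  by case: (_ \in _).
Qed.

Definition step (I : finType) (b : bool) (c a : I -> R) (t : R) : R :=
  \sum_i c i * ind b (a i) t.
Arguments step {I}.

Lemma ind_integrableZ b a k :
  lebesgue_measure.-integrable D (fun x => (k * ind b a x)%:E).
Proof.
change (lebesgue_measure.-integrable D (fun x => (k%:E * (EFin \o ind b a) x)%E)).
apply: integrableZl; [exact: measurable_itv | exact: ind_integrable].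
Qed.

Lemma step_integrable (I : finType) b (c a : I -> R) :
  lebesgue_measure.-integrable D (EFin \o step b c a).
Proof.
rewrite (_ : _ \o _ = fun x => \sum_i (c i * ind b (a i) x)%:E); last first.
  by apply: funext => x; rewrite /= sumEFin.
apply: integrable_sum; first exact: measurable_itv.
move=> i _; exact: ind_integrableZ.
Qed.

Lemma step_int (I : finType) b (c a : I -> R) : (forall i, 0 <= a i) ->
  (\int[lebesgue_measure]_(t in D) (step b c a t)%:E =
   (\sum_i c i * Num.min (a i) 2^-1)%:E)%E.
Proof.
move=> a0.
rewrite /step; under eq_integral do rewrite -sumEFin.
rewrite integral_sum //; [|exact: measurable_itv|by move=> i; exact: ind_integrableZ].
rewrite -sumEFin; apply: eq_bigr => i _.
change ((\int[lebesgue_measure]_(t in D) ((c i)%:E * (EFin \o ind b (a i)) t))%E = (c i * Num.min (a i) 2^-1)%:E).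
rewrite integralZl //; [by rewrite /= ind_int|exact: measurable_itv|exact: ind_integrable].
Qed.
End S.
Arguments ind {R}.
Arguments step {R I}.

Section G.
Variables (R : realType) (V : finType) (f : {set V} -> R).
Hypothesis fnn : forall S, 0 <= f S.
Hypothesis f0 : f finset.set0 = 0.
Hypothesis fsub : forall A B : {set V}, f (A :|: B) + f (A :&: B) <= f A + f B.

Definition upcl (w : V -> R) (T S : {set V}) :=
  forall a b, a \in S -> b \in T -> w a <= w b -> b \in S.

Lemma greedy (w : V -> R) (T : {set V}) : exists pi : V -> R,
  [/\ forall S : {set V}, S \subset T -> \sum_(j in S) pi j <= f S,
      forall S : {set V}, S \subset T -> upcl w T S -> \sum_(j in S) pi j = f S &
      forall c, 0 <= \sum_(j in T) pi j * Num.max 0 (w j - c)].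
Proof.
have [n] := ubnP #|T|; elim: n T => // n IH T.
have [->|[j0 j0T]] := set_0Vmem T => [_|Tn].
  exists (fun=> 0); split.
  - by move=> S _; rewrite big1 // => *.
  - move=> S; rewrite finset.subset0 => /eqP -> _; by rewrite big_set0 f0.
  - by move=> c; rewrite big_set0.
have [j jT jmin] : exists2 j, j \in T & forall b, b \in T -> w j <= w b.
  case: (@extremumP _ _ <=%R j0 (mem T) w lexx (@le_trans _ _) le_total j0T) => j.
  by exists j.
set T' := T :\ j.
have T'T : T' \subset T by apply: subsetDl.
have jT' : j \notin T' by rewrite !inE eqxx.
have [pi' [h1 h2 h3]] : exists pi' : V -> R,
  [/\ forall S : {set V}, S \subset T' -> \sum_(j in S) pi' j <= f S,
      forall S : {set V}, S \subset T' -> upcl w T' S -> \sum_(j in S) pi' j = f S &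
      forall c, 0 <= \sum_(j in T') pi' j * Num.max 0 (w j - c)].
  apply: IH; move: Tn; rewrite (cardsD1 j T) jT /=; by [].
pose pi a := if a == j then f T - f T' else pi' a.
have piS S : j \notin S -> \sum_(a in S) pi a = \sum_(a in S) pi' a.
  move=> jS; apply: eq_bigr => a aS; rewrite /pi; case: eqP => // eaj.
  by move: jS; rewrite -eaj aS.
have piT' : \sum_(a in T') pi' a = f T'.
  by apply: h2 => // a b _ ->.
have piT : \sum_(a in T) pi a = f T.
  rewrite (big_setD1 j jT) /= piS // piT' /pi eqxx; lra.
exists pi; split.
- move=> S ST; have [jS|jS] := boolP (j \in S); last first.
    rewrite piS //; apply: h1; apply/fintype.subsetP => x xS; rewrite !inE (fintype.subsetP ST) // andbT.
    by apply/eqP => exj; move: jS; rewrite -exj xS.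
  rewrite (big_setD1 j jS) /= piS ?(inE, eqxx) //.
  have := h1 (S :\ j) (finset.setSD _ ST).
  have := fsub S T'.
  have -> : S :|: T' = T.
    apply/finset.setP => x; rewrite !inE; case: (x =P j) => [->|_]; first by rewrite jS jT.
    by rewrite /=; case xS: (x \in S) => //=; rewrite (fintype.subsetP ST).
  have -> : S :&: T' = S :\ j.
    by apply/finset.setP => x; rewrite !inE; case xS: (x \in S); rewrite ?andbF //= (fintype.subsetP ST x xS) andbT.
  rewrite /pi eqxx; lra.
- move=> S ST Sup; have [jS|jS] := boolP (j \in S).
    have -> : S = T.
      apply/eqP; rewrite finset.eqEsubset ST /=; apply/fintype.subsetP => b bT.
      exact: (Sup j b jS bT (jmin b bT)).
    exact: piT.
  have ST' : S \subset T'.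
    apply/fintype.subsetP => x xS; rewrite !inE (fintype.subsetP ST) // andbT.
    by apply/eqP => exj; move: jS; rewrite -exj xS.
  rewrite piS //; apply: h2 => // a b aS bT'; apply: Sup => //; exact: (fintype.subsetP T'T).
- move=> c; have [wjc|wjc] := leP (w j) c.
    rewrite (big_setD1 j jT) /=.
    rewrite (_ : Num.max 0 (w j - c) = 0) ?mulr0 ?add0r; last first.
      by apply/max_idPl; lra.
    rewrite (eq_bigr (fun a => pi' a * Num.max 0 (w a - c))); first exact: h3.
    move=> a; rewrite !inE => /andP[/negPf naj _]; by rewrite /pi naj.
  have E : forall a, a \in T -> Num.max 0 (w a - c) = Num.max 0 (w a - w j) + (w j - c).
    move=> a aT; have := jmin a aT => hw.
    rewrite (_ : Num.max 0 (w a - c) = w a - c); last by apply/max_idPr; lra.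
    rewrite (_ : Num.max 0 (w a - w j) = w a - w j); last by apply/max_idPr; lra.
    lra.
  rewrite (eq_bigr (fun a => pi a * Num.max 0 (w a - w j) + pi a * (w j - c))); last first.
    by move=> a aT; rewrite E // mulrDr.
  rewrite big_split /= -big_distrl /= piT.
  rewrite (big_setD1 j jT) /= subrr.
  rewrite (_ : Num.max 0 0 = 0 :> R) ?mulr0 ?add0r; last by apply/max_idPl.
  rewrite (eq_bigr (fun a => pi' a * Num.max 0 (w a - w j))); last first.
    move=> a; rewrite !inE => /andP[/negPf naj _]; by rewrite /pi naj.
  have := h3 (w j); have := fnn T => ? ?.
  apply: addr_ge0 => //; apply: mulr_ge0 => //; lra.
Qed.

Lemma sumsetT (F : V -> R) : \sum_(j in [set: V]) F j = \sum_j F j.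
Proof. by apply: eq_bigl => j; rewrite finset.in_setT. Qed.


Lemma sum_step_lt (c w : V -> R) t :
  \sum_(j in [set j | t < w j]) c j = step true c w t.
Proof.
rewrite /step big_mkcond /=; apply: eq_bigr => j _; rewrite inE indE /=.
by case: ifP; rewrite ?mulr1 ?mulr0.
Qed.

Lemma sum_step_le (c w : V -> R) t :
  \sum_(j in [set j | t <= w j]) c j = step false c w t.
Proof.
rewrite /step big_mkcond /=; apply: eq_bigr => j _; rewrite inE indE /=.
by case: ifP; rewrite ?mulr1 ?mulr0.
Qed.

Lemma f_step_lt (w : V -> R) : exists rho, forall t,
  f [set j | t < w j] = step true rho w t.
Proof.
have [rho [_ h2 _]] := greedy w [set: V].
exists rho => t; rewrite -sum_step_lt; symmetry; apply: h2; first exact: finset.subsetT.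
move=> a b; rewrite !inE => ha _ hab; exact: lt_le_trans hab.
Qed.

Lemma union_le (g : {set V} -> R) (gnn : forall S, 0 <= g S)
  (g0 : g finset.set0 = 0)
  (gsub : forall A B : {set V}, g (A :|: B) + g (A :&: B) <= g A + g B)
  (I : Type) (r : seq I) (A : I -> {set V}) :
  g (\bigcup_(i <- r) A i) <= \sum_(i <- r) g (A i).
Proof.
elim: r => [|a r IH]; first by rewrite !big_nil g0.
rewrite !big_cons; have := gsub (A a) (\bigcup_(i <- r) A i).
have := gnn (A a :&: \bigcup_(i <- r) A i); lra.
Qed.

Lemma sum_mod (c : V -> R) (A B : {set V}) :
  \sum_(j in A :|: B) c j + \sum_(j in A :&: B) c j =
  \sum_(j in A) c j + \sum_(j in B) c j.
Proof.
rewrite !(big_mkcond (fun j => j \in _)) -!big_split /=; apply: eq_bigr => j _.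
rewrite !inE; by case: (j \in A); case: (j \in B); rewrite /= ?addr0 ?add0r.
Qed.

Lemma main (k : nat) (x : 'I_k -> V -> R)
  (xnn : forall i j, 0 <= x i j) (xs : forall j, \sum_(i < k) x i j = 1) :
  (\sum_(i < k) \int[lebesgue_measure]_(theta in `[0%R, 2^-1%R]%classic)
       (f (Aset x i theta))%:E
   >= \int[lebesgue_measure]_(theta in `[0%R, 2^-1%R]%classic)
       (f (Bset x theta))%:E)%E.
Proof.
pose m j := maxx x j.
have m0 j : 0 <= m j.
  rewrite /m /maxx; elim/big_ind: _ => // p q hp hq; by rewrite le_max hp.
have xm i j : x i j <= m j by rewrite /m /maxx; exact: le_bigmax.
have x1 i j : x i j <= 1.
  have := xs j; rewrite (bigD1 i) //= => h.
  have : 0 <= \sum_(l < k | l != i) x l j by apply: sumr_ge0 => l _.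
  lra.
have m1 j : m j <= 1 by rewrite /m /maxx; apply: bigmax_le => // i _.
have mlt t j : 0 <= t -> (t < m j) = [exists i, t < x i j].
  move=> t0; apply/idP/idP => [tm|/existsP[i ti]]; last exact: lt_le_trans ti (xm i j).
  apply: contraLR tm; rewrite negb_exists => /forallP nt; rewrite -leNgt.
  rewrite /m /maxx; apply: bigmax_le => // i _; by rewrite leNgt nt.
pose u j := 1 - m j.
have u0 j : 0 <= u j by have := m1 j; rewrite /u; lra.
have [pi [p1 p2 p3]] := greedy u [set: V].
have Hstep t : f (Bset x t) = step false pi u t.
  rewrite -sum_step_le; symmetry; apply: p2; first exact: finset.subsetT.
  move=> a b; rewrite !inE => ha _ hab; exact: le_trans hab.
have Fstep i : exists rho, forall t, f (Aset x i t) = step true rho (x i) t.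
  have [rho hr] := f_step_lt (x i); exists rho => t; exact: hr t.
pose g S := f S - \sum_(j in S) pi j.
have gnn S : 0 <= g S by have := p1 S (finset.subsetT S); rewrite /g; lra.
have g0 : g finset.set0 = 0 by rewrite /g big_set0 f0 subrr.
have gsub A B : g (A :|: B) + g (A :&: B) <= g A + g B.
  have := fsub A B; have := sum_mod pi A B; rewrite /g; lra.
have pw t : 0 <= t ->
  (\sum_(i < k) step true pi (x i) t) - step true pi m t <= \sum_(i < k) f (Aset x i t).
  move=> t0.
  have hU := @union_le g gnn g0 gsub _ (index_enum 'I_k) (fun i => Aset x i t).
  have EU : \bigcup_(i <- index_enum 'I_k) Aset x i t = [set j | t < m j].
    apply/finset.setP => j; rewrite inE mlt //; apply/bigcupP/existsP => [[i _]|[i]].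
      by rewrite inE => ?; exists i.
    by move=> ?; exists i => //; rewrite inE.
  rewrite EU /g sum_step_lt in hU.
  rewrite /g big_split /= sumrN in hU.
  have EA : \sum_(i < k) \sum_(j in Aset x i t) pi j = \sum_(i < k) step true pi (x i) t.
    by apply: eq_bigr => i _; rewrite /Aset sum_step_lt.
  rewrite EA in hU; have := fnn [set j | t < m j]; lra.
  have intF i : lebesgue_measure.-integrable `[0%R, 2^-1%R]%classic
    (fun t => (f (Aset x i t))%:E).
  have [rho hr] := Fstep i.
  apply: (eq_integrable _ _ _ _ (step_integrable _ _ true rho (x i))).
  - exact: measurable_itv.
  - by move=> t _; rewrite /= hr.
pose S1 t := step true (fun p : 'I_k * V => pi p.2) (fun p => x p.1 p.2) t.
have S1E t : S1 t = \sum_(i < k) step true pi (x i) t.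
  by rewrite /S1 /step pair_big.
have key j : \sum_(i < k) Num.min (x i j) 2^-1 - Num.min (m j) 2^-1 = u j.
  rewrite /u; case: (boolP [exists i, 2^-1 < x i j]) => [/existsP[i0 hi0]|].
    have oth l : l != i0 -> x l j <= 1 - x i0 j.
      move=> li0; have := xs j; rewrite (bigD1 i0) //= (bigD1 l) //=.
      have : 0 <= \sum_(l0 < k | (l0 != i0) && (l0 != l)) x l0 j.
        by apply: sumr_ge0.
      lra.
    have mE : m j = x i0 j.
      apply/eqP; rewrite eq_le xm andbT /m /maxx; apply: bigmax_le => // l _.
      have [->|li0] := eqVneq l i0; first by [].
      have := oth l li0; lra.
    rewrite mE (bigD1 i0) //= (@min_r _ _ (x i0 j)); last by lra.
    rewrite (eq_bigr (fun l => x l j)); last first.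
      move=> l li0; apply: min_l; have := oth l li0; lra.
    have := xs j; rewrite (bigD1 i0) //=; lra.
  rewrite negb_exists => /forallP hle.
  have hle' i : x i j <= 2^-1 by rewrite leNgt hle.
  have mh : m j <= 2^-1 by rewrite /m /maxx; apply: bigmax_le => // i _.
  rewrite (min_l mh) (eq_bigr (fun l => x l j)); last by move=> l _; apply: min_l.
  by rewrite xs.
rewrite -(integral_sum _ intF); last exact: measurable_itv.
have EH : (\int[lebesgue_measure]_(t in `[0%R, 2^-1%R]%classic) (f (Bset x t))%:E =
  \int[lebesgue_measure]_(t in `[0%R, 2^-1%R]%classic) (step false pi u t)%:E)%E.
  by apply: eq_integral => t _; rewrite Hstep.
rewrite EH step_int //.
have intS1 : lebesgue_measure.-integrable `[0%R, 2^-1%R]%classic (EFin \o S1).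
  exact: step_integrable.
have intM : lebesgue_measure.-integrable `[0%R, 2^-1%R]%classic (EFin \o step true pi m).
  exact: step_integrable.
apply: (@le_trans _ _ (\int[lebesgue_measure]_(t in `[0%R, 2^-1%R]%classic)
   ((S1 t)%:E - (step true pi m t)%:E))%E).
  rewrite integralB_EFin //; try exact: measurable_itv.
  rewrite /S1 !step_int //.
  rewrite -EFinB lee_fin.
  have E2 : \sum_(p : 'I_k * V) pi p.2 * Num.min (x p.1 p.2) 2^-1 =
            \sum_j pi j * \sum_(i < k) Num.min (x i j) 2^-1.
    by under [RHS]eq_bigr do rewrite big_distrr; rewrite /= exchange_big pair_big.
  have E4 : \sum_j pi j * \sum_(i < k) Num.min (x i j) 2^-1 - \sum_j pi j * Num.min (m j) 2^-1
           = \sum_j pi j * u j.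
    by rewrite -sumrB; apply: eq_bigr => j _; rewrite -mulrBr key.
  have E3 : \sum_j pi j * u j = \sum_j pi j * Num.min (u j) 2^-1 +
                                \sum_j pi j * Num.max 0 (u j - 2^-1).
    rewrite -big_split; apply: eq_bigr => j _ /=; rewrite -mulrDr; congr (_ * _).
    have [h|h] := leP (u j) 2^-1.
      have -> : Num.max 0 (u j - 2^-1) = 0 by apply/max_idPl; lra.
      by rewrite addr0.
    have -> : Num.max 0 (u j - 2^-1) = u j - 2^-1 by apply/max_idPr; lra.
    lra.
  have := p3 2^-1; rewrite sumsetT; lra.
apply: le_integral.
- exact: measurable_itv.
- apply: integrableB; [exact: measurable_itv | exact: intS1 | exact: intM].
- apply: integrable_sum; [exact: measurable_itv | by move=> i _; exact: intF].
- move=> t; rewrite inE /= in_itv /= => /andP[t0 _].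
  by rewrite sumEFin -EFinB lee_fin S1E; exact: pw.
Qed.

End G.

Theorem lemma5 (R : realType) (V : finType) (f : {set V} -> R)
  (k : nat) (t : 'I_k -> V) (x : 'I_k -> V -> R) :
  (forall S, 0 <= f S) -> submodular f -> f finset.set0 = 0 ->
  injective t ->
  (forall i j, 0 <= x i j) ->
  (forall j, \sum_(i < k) x i j = 1) ->
  (forall i, x i (t i) = 1) ->
  (\sum_(i < k) \int[lebesgue_measure]_(theta in `[0%R, 2^-1%R]%classic)
       (f (Aset x i theta))%:E
   >= \int[lebesgue_measure]_(theta in `[0%R, 2^-1%R]%classic)
       (f (Bset x theta))%:E)%E.
Proof.
move=> fnn fsub f0 _ xnn xs _.
exact: (@main R V f fnn f0 fsub k x xnn xs).
Qed.
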